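(* For every zero-error variable-length $(k,N)$ network code for the network in the context and every $\boldsymbol\sigma\in\{0,1,2,3\}^k$ having exactly $x$ components equal to $1$ and $y$ components equal to $2$, $$H(\mathbf Z_1^N,\mathbf Z_2^N\mid\boldsymbol\Sigma=\boldsymbol\sigma)\ \ge\ H(\mathbf p^\star_{x,y}).$$
   Context: Network: sources $s_1,s_2,s_3$, terminal $t$, edges $(s_3,s_1),(s_3,s_2),(s_1,t),(s_2,t)$; $s_j$ observes $\mathbf X_j\in\{0,1\}^k$, all $3k$ bits i.i.d. uniform; $s_1,s_2$ receive $\mathbf X_3$. $\mathcal Z$ is a finite alphabet, $|\mathcal Z|\ge2$. A variable-length $(k,N)$ network code: encoders $\phi_1,\phi_2:\{0,1\}^k\times\{0,1\}^k\to\mathcal Z^*$ giving sequences $\mathbf Z_1=\phi_1(\mathbf X_1,\mathbf X_3)$, $\mathbf Z_2=\phi_2(\mathbf X_2,\mathbf X_3)$; a positive-integer-valued stopping time $N$ for the sequence of pairs $(\mathbf Z_1(m),\mathbf Z_2(m))_{m\ge1}$; a decoder $\hat{\boldsymbol\Sigma}=\psi(\mathbf Z_1^N,\mathbf Z_2^N)$, $\mathbf Z_j^N$ the first $N$ symbols of $\mathbf Z_j$. $\boldsymbol\Sigma=\mathbf X_1+\mathbf X_2+\mathbf X_3$ (componentwise integer sum); zero-error means $\Pr(\hat{\boldsymbol\Sigma}\ne\boldsymbol\Sigma)=0$. Clumpy distribution: for $m=x+y$, $L=2^m$, $M=3^m$, let $n_1\ge n_2\ge\dots\ge n_L$ be the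 list in which, for each $u=0,1,\dots,m$, the value $2^{m-u}$ appears exactly $\binom mu$ times (so $\sum_in_i=M$); let $\mathbf e_i^\star\in\{0,1\}^L$ have ones in its first $n_i$ positions and zeros elsewhere; $\mathbf p^\star_{x,y}=\frac1M\sum_{i=1}^L\mathbf e_i^\star$. $H$ denotes Shannon entropy in bits. *)

(* Defs.v *)
From Stdlib Require Import Reals.
From mathcomp Require Import all_boot.
Set Implicit Arguments. Unset Strict Implicit. Unset Printing Implicit Defensive.

Definition log2 (x : R) : R := Rdiv (ln x) (ln (INR 2)).

Definition entropy_list (p : seq R) : R :=
  Ropp (foldr Rplus R0
         [seq (if Rlt_dec R0 q then Rmult q (log2 q) else R0) | q <- p]).

Definition distr_of {T : Type} {V : eqType} (s : seq T) (W : T -> V) : seq R :=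
  let ws := [seq W w | w <- s] in
  [seq Rdiv (INR (count_mem v ws)) (INR (size ws)) | v <- undup ws].

Definition bits (k : nat) := {ffun 'I_k -> bool}.

(** Sample space: (X1, X2, X3), all 3k bits i.i.d. uniform, i.e. the
    uniform distribution on this finite type. *)
Definition outcome (k : nat) := (bits k * bits k * bits k)%type.
Definition X1 {k} (w : outcome k) : bits k := w.1.1.
Definition X2 {k} (w : outcome k) : bits k := w.1.2.
Definition X3 {k} (w : outcome k) : bits k := w.2.

Definition Sigma {k} (w : outcome k) : {ffun 'I_k -> nat} :=
  [ffun i => (X1 w i : nat) + X2 w i + X3 w i].

Definition cond_entropy_Sigma {k : nat} {V : eqType}
    (W : outcome k -> V) (sigma : {ffun 'I_k -> nat}) : R :=
  entropy_list (distr_of (enum [pred w : outcome k | Sigma w == sigma]) W).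

Record vl_code (k : nat) (Z : finType) := VLCode {
  phi1 : bits k -> bits k -> seq Z;
  phi2 : bits k -> bits k -> seq Z;
  stopN : outcome k -> nat;
  psi : seq Z -> seq Z -> {ffun 'I_k -> nat}
}.

Section CodeDefs.
Variables (k : nat) (Z : finType) (c : vl_code k Z).
Definition Z1 (w : outcome k) : seq Z := phi1 c (X1 w) (X3 w).
Definition Z2 (w : outcome k) : seq Z := phi2 c (X2 w) (X3 w).
Definition pairs (w : outcome k) : seq (Z * Z) := zip (Z1 w) (Z2 w).
Definition Z1N (w : outcome k) : seq Z := take (stopN c w) (Z1 w).
Definition Z2N (w : outcome k) : seq Z := take (stopN c w) (Z2 w).

Definition is_stopping_time : Prop :=
  (forall w, 0 < stopN c w) /\
  (forall w, stopN c w <= size (pairs w)) /\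
  (forall w w' m, stopN c w = m ->
      take m (pairs w) = take m (pairs w') -> stopN c w' = m).

(** Zero error: Pr(Sigma_hat <> Sigma) = 0; since every outcome has positive
    probability, this means correct decoding on every outcome. *)
Definition zero_error : Prop :=
  forall w, psi c (Z1N w) (Z2N w) = Sigma w.
End CodeDefs.

Definition clumpy_n (m : nat) : seq nat :=
  flatten [seq nseq 'C(m, u) (2 ^ (m - u)) | u <- iota 0 m.+1].

(** p* = (1/M) sum_i e*_i, where e*_i has ones in its first n_i positions:
    coordinate j (1 <= j <= L) equals #{i | j <= n_i} / M. *)
Definition clumpy (x y : nat) : seq R :=
  let m := x + y in
  [seq Rdiv (INR (count (fun n => j <= n) (clumpy_n m))) (INR (3 ^ m))
  | j <- iota 1 (2 ^ m)].

(* Main.v *)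
Require Import Defs.
From Stdlib Require Import Reals Lra Lia.
From mathcomp Require Import all_boot zify.
Set Implicit Arguments. Unset Strict Implicit. Unset Printing Implicit Defensive.

Module PartA.

Lemma take_zip_eq (A B : Type) n (s : seq A) (t : seq B) :
  take n (zip s t) = zip (take n s) (take n t).
Proof. by elim: n s t => [|n IH] [|a s] [|b t] //=; rewrite IH. Qed.

Section PartA.
Variables (k : nat) (Z : finType) (c : vl_code k Z).

Lemma size_ZN w : is_stopping_time c ->
  size (Z1N c w) = stopN c w /\ size (Z2N c w) = stopN c w.
Proof.
move=> [_ [Hle _]]; have := Hle w; rewrite /pairs size_zip => H.
split; apply: size_takel; apply: (leq_trans H); [exact: geq_minl | exact: geq_minr].
Qed.

Lemma class_fiber_inj w w' : is_stopping_time c -> zero_error c ->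
  Sigma w = Sigma w' ->
  (Z1N c w, Z2N c w) = (Z1N c w', Z2N c w') -> X3 w = X3 w' -> w = w'.
Proof.
move=> Hst Hze HS [H1 H2] H3.
have [s1 _] := size_ZN w Hst; have [s1' _] := size_ZN w' Hst.
have Hn : stopN c w' = stopN c w by rewrite -s1 -s1' H1.
pose v : outcome k := ((X1 w, X2 w'), X3 w).
have eZ1 : Z1 c v = Z1 c w by [].
have eZ2 : Z2 c v = Z2 c w' by rewrite /Z2 /v /X3 /= -/(X3 w) H3.
have Hp : take (stopN c w) (pairs c w) = take (stopN c w) (pairs c v).
  rewrite /pairs !take_zip_eq eZ1 eZ2 -Hn.
  by rewrite -/(Z2N c w') -H2 Hn.
have [_ [_ Hstp]] := Hst.
have Hv := Hstp w v _ erefl Hp.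
have e1 : Z1N c v = Z1N c w by rewrite /Z1N Hv eZ1.
have e2 : Z2N c v = Z2N c w by rewrite H2 /Z2N Hv eZ2 Hn.
have HSv : Sigma v = Sigma w by rewrite -!Hze e1 e2.
have E2 : X2 w' = X2 w.
  apply/ffunP => i; move/ffunP: HSv => /(_ i); rewrite !ffunE /=.
  by move/eqP; rewrite -/(X1 w) -/(X3 w) eqn_add2r eqn_add2l => /eqP /(congr1 (fun b : nat => b == 1)); case: (X2 w' i); case: (X2 w i).
have E1 : X1 w = X1 w'.
  apply/ffunP => i; move/ffunP: HS => /(_ i); rewrite !ffunE -E2 H3.
  by move/eqP; rewrite eqn_add2r eqn_add2r => /eqP /(congr1 (fun b : nat => b == 1)); case: (X1 w' i); case: (X1 w i).
rewrite [w]surjective_pairing [w.1]surjective_pairing [w']surjective_pairing [w'.1]surjective_pairing.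
by move: E1 E2 H3; rewrite /X1 /X2 /X3 => -> -> ->.
Qed.
End PartA.

End PartA.
Import PartA.

Module PartB.
Local Open Scope R_scope.

Definition rsum (l : seq R) : R := foldr Rplus R0 l.
Definition phi (a : nat) : R := (INR a * ln (INR a)).

Lemma rsum_cat l1 l2 : rsum (l1 ++ l2) = (rsum l1 + rsum l2).
Proof. rewrite /rsum; elim: l1 => /= [|a l IH]; rewrite ?IH; ring. Qed.

Lemma rsum_plus (T : Type) (l : seq T) f g :
  rsum [seq (f v + g v) | v <- l] = (rsum (map f l) + rsum (map g l)).
Proof. rewrite /rsum; elim: l => /= [|a l IH]; rewrite ?IH; ring. Qed.

Lemma rsum_scal (T : Type) (l : seq T) f a :
  rsum [seq (a * f v) | v <- l] = (a * rsum (map f l)).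
Proof. rewrite /rsum; elim: l => /= [|b l IH]; rewrite ?IH; ring. Qed.

Lemma rsum_le (T : eqType) (l : seq T) f g :
  (forall v, v \in l -> f v <= g v) -> (rsum (map f l) <= rsum (map g l)).
Proof.
rewrite /rsum; elim: l => /= [|a l IH] H; first lra.
apply: Rplus_le_compat; first by apply: H; rewrite inE eqxx.
by apply: IH => v Hv; apply: H; rewrite inE Hv orbT.
Qed.

Lemma rsum_eq_in (T : eqType) (l : seq T) f g :
  (forall v, v \in l -> f v = g v) -> rsum (map f l) = rsum (map g l).
Proof. by move=> H; congr rsum; apply/eq_in_map. Qed.

Lemma rsum_exch (T U : Type) (l : seq T) (rs : seq U) (g : U -> T -> R) :
  rsum [seq rsum [seq g r v | r <- rs] | v <- l] =
  rsum [seq rsum [seq g r v | v <- l] | r <- rs].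
Proof.
elim: l => /= [|a l IH].
  by rewrite /rsum; elim: rs => //= r rs <-; rewrite Rplus_0_l.
rewrite {1}/rsum /= -/(rsum _) IH -rsum_plus.
by congr rsum; apply: eq_map => r.
Qed.

Lemma INR_sumn (T : Type) (l : seq T) (f : T -> nat) :
  INR (sumn (map f l)) = rsum [seq INR (f v) | v <- l].
Proof. rewrite /rsum; elim: l => //= a l <-; exact: plus_INR. Qed.

Lemma ln_div x y : 0 < x -> 0 < y -> ln (x / y) = ln x - ln y.
Proof.
move=> Hx Hy; have Hy' : 0 < / y by apply: Rinv_0_lt_compat.
rewrite /Rdiv ln_mult // ln_Rinv //; ring.
Qed.

Lemma entropy_form (T : Type) (l : seq T) (f : T -> nat) (M : nat) : (0 < M)%N ->
  entropy_list [seq Rdiv (INR (f v)) (INR M) | v <- l] =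
  ((INR (sumn (map f l)) * ln (INR M) - rsum [seq phi (f v) | v <- l]) /
     (INR M * ln (INR 2))).
Proof.
move=> HM.
have HM' : (0 < INR M) by apply: lt_0_INR; apply/ltP.
have Hl2 : (0 < ln (INR 2)) by rewrite -ln_1; apply: ln_increasing; simpl; lra.
rewrite /entropy_list -map_comp.
move: Hl2; set L2 := ln (INR 2) => Hl2.
have Hterm : forall v, (if Rlt_dec R0 (INR (f v) / INR M) then (INR (f v) / INR M) * log2 (INR (f v) / INR M) else R0)
   = ((phi (f v) - INR (f v) * ln (INR M)) / (INR M * L2)).
  move=> v; rewrite /phi /log2 -/L2.
  case: (Rlt_dec _ _) => Hp.
    have Hf : (0 < INR (f v)).
      apply: (Rmult_lt_reg_r (/ INR M)); first by apply: Rinv_0_lt_compat.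
      by rewrite Rmult_0_l.
    rewrite ln_div //=; field; repeat split; lra.
  rewrite /=; case E: (f v) => [|n]; first by rewrite /=; field; repeat split; lra.
  exfalso; apply: Hp; apply: Rdiv_lt_0_compat => //; apply: lt_0_INR; lia.
elim: l => /= [|a l IH]; first by field; repeat split; lra.
move: IH; rewrite /comp Hterm => IH.
have -> : forall A B, (- (A + B) = - A + - B) by move=> *; ring.
rewrite IH plus_INR /rsum /= -/(rsum _); field; repeat split; lra.
Qed.

(* layer cake *)
Definition Dl (l : nat) : R := match l with 0 => R0 | S l' => (phi (S l') - phi l') end.
Definition gam (r : nat) : R := (Dl r.+1 - Dl r).

Lemma gam_sum t : rsum [seq gam r | r <- iota 0 t] = Dl t.
Proof.
elim: t => [|t IH]; first by [].
rewrite -addn1 iotaD map_cat rsum_cat IH /= /rsum /= /gam add0n addn1; ring.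
Qed.

Lemma phi_cake_eq t : phi t = rsum [seq (gam r * INR (t - r)) | r <- iota 0 t].
Proof.
elim: t => [|t IH]; first by rewrite /phi /= Rmult_0_l.
rewrite -addn1 iotaD map_cat rsum_cat /= add0n addKn addn1 /=.
rewrite (@rsum_eq_in _ _ _ (fun r => gam r * INR (t - r) + gam r)).
  rewrite rsum_plus -IH gam_sum /rsum /= /gam /=.
  case: t {IH} => [|t] /=; rewrite /phi /=; ring.
move=> r; rewrite mem_iota add0n => Hr.
by rewrite subSn ?S_INR; [ring | case/andP: Hr => _ /ltnW].
Qed.

Lemma phi_cake t T : (t <= T)%N ->
  phi t = rsum [seq (gam r * INR (t - r)) | r <- iota 0 T].
Proof.
move=> HT; rewrite -(subnKC HT) iotaD map_cat rsum_cat -phi_cake_eq add0n.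
rewrite (@rsum_eq_in _ _ _ (fun r => 0 * 0)).
  by rewrite rsum_scal; ring.
move=> r; rewrite mem_iota => /andP [H _]; have -> : (t - r = 0)%N by apply/eqP; rewrite subn_eq0.
by rewrite /=; ring.
Qed.

Lemma sum_cake (T : Type) (l : seq T) f B : (forall v, f v <= B)%N ->
  rsum [seq phi (f v) | v <- l] =
  rsum [seq (gam r * INR (sumn [seq (f v - r)%N | v <- l])) | r <- iota 0 B].
Proof.
move=> HB.
rewrite (@eq_map _ _ (fun v => phi (f v)) (fun v => rsum [seq (gam r * INR (f v - r)) | r <- iota 0 B])); last first.
  by move=> v; apply: phi_cake.
rewrite rsum_exch; congr rsum; apply: eq_map => r.
by rewrite rsum_scal INR_sumn.
Qed.

Lemma ln_le_sub1 y : (0 < y) -> (ln y <= y - 1).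
Proof. move=> Hy; have := exp_ineq1_le (ln y); rewrite exp_ln //; lra. Qed.

Lemma gam_ge0 r : (0 <= gam r).
Proof.
case: r => [|a]; first by rewrite /gam /= /phi /= ln_1; lra.
rewrite /gam /Dl /phi.
have E : forall n, INR n.+1 = (INR n + 1) by move=> n; rewrite S_INR.
rewrite !E.
have Ha : (0 <= INR a) by apply: pos_INR.
have H1 : (ln (INR a + 1 + 1) - ln (INR a + 1) >= 1 / (INR a + 1 + 1)).
  have := ln_le_sub1 (y := ((INR a + 1) / (INR a + 1 + 1))).
  rewrite ln_div; try lra. move=> H; have := H ltac:(apply: Rdiv_lt_0_compat; lra).
  move=> H'; apply: Rle_ge.
  have -> : (1 / (INR a + 1 + 1) = - ((INR a + 1) / (INR a + 1 + 1) - 1)) by field; repeat split; lra.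
  lra.
have H2 : (INR a * (ln (INR a + 1) - ln (INR a)) <= 1).
  case: (Req_dec (INR a) 0) => Ha0; first by rewrite Ha0; lra.
  have Hap : (0 < INR a) by lra.
  have := ln_le_sub1 (y := ((INR a + 1) / INR a)).
  rewrite ln_div; try lra. move=> H; have := H ltac:(apply: Rdiv_lt_0_compat; lra).
  move=> H'.
  apply: (Rle_trans _ (INR a * ((INR a + 1) / INR a - 1))).
    apply: Rmult_le_compat_l; lra.
  right; field; lra.
have H1' : ((INR a + 1 + 1) * (ln (INR a + 1 + 1) - ln (INR a + 1)) >= 1).
  apply: Rle_ge; apply: (Rle_trans _ ((INR a + 1 + 1) * (1 / (INR a + 1 + 1)))).
    right; field; lra.
  apply: Rmult_le_compat_l; lra.
set L2 := ln (INR a + 1 + 1) in H1 H1' *; set L1 := ln (INR a + 1) in H1 H1' H2 *; set L0 := ln (INR a) in H2 *.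
have -> : (INR a + 1 + 1) * L2 - (INR a + 1) * L1 - ((INR a + 1) * L1 - INR a * L0)
  = (INR a + 1 + 1) * (L2 - L1) - INR a * (L1 - L0) by ring.
lra.
Qed.

End PartB.
Import PartB.

Module PartC.

Lemma sumn_mapE (T : Type) (l : seq T) (f : T -> nat) : sumn (map f l) = \sum_(j <- l) f j.
Proof. by rewrite sumnE big_map. Qed.

Lemma sum_iota_le a J : \sum_(j <- iota 1 J) (j <= a) = minn a J.
Proof.
elim: J => [|J IH]; first by rewrite big_nil minn0.
rewrite -[J.+1]addn1 iotaD big_cat /= IH big_cons big_nil add1n.
case: (leqP J.+1 a) => H /=; lia.
Qed.

Lemma card_cond (C : finType) (R : {set C}) (P : pred C) :
  #|[set c in R | P c]| = \sum_(c in R) P c.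
Proof.
rewrite -sum1_card big_mkcond /= [RHS]big_mkcond /=; apply: eq_bigr => c _.
by rewrite !inE; case: (c \in R); case: (P c).
Qed.

Lemma topr (C : finType) (n : C -> nat) (r J : nat) :
  exists R : {set C}, #|R| <= r /\
    sumn [seq minn #|[set c | j <= n c]| r | j <- iota 1 J] <= \sum_(c in R) n c.
Proof.
have P0 : #|(set0 : {set C})| <= r by rewrite cards0.
case: (@arg_maxnP _ set0 (fun R : {set C} => #|R| <= r) (fun R : {set C} => \sum_(c in R) n c) P0) => R HR Hmax.
exists R; split => //.
have Hclaim : forall j, 0 < j -> minn #|[set c | j <= n c]| r <= #|[set c in R | j <= n c]|.
  move=> j Hj.
  case: (boolP ([set c | j <= n c] \subset R)) => Hsub.
    rewrite geq_min; apply/orP; left; apply: subset_leq_card; apply/subsetP => c.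
    rewrite !inE => Hc; rewrite Hc andbT; apply: (subsetP Hsub); by rewrite inE.
  case/subsetPn: Hsub => c0; rewrite inE => Hc0 Hc0R.
  have Hr : r <= #|R|.
    rewrite leqNgt; apply/negP => Hlt.
    have := Hmax (c0 |: R); rewrite cardsU1 Hc0R /= add1n => /(_ Hlt).
    rewrite big_setU1 //=; lia.
  have HallR : forall c, c \in R -> j <= n c.
    move=> c Hc; rewrite leqNgt; apply/negP => Hlt.
    have Hc0' : c0 \notin R :\ c by rewrite !inE negb_and Hc0R orbT.
    have := Hmax (c0 |: (R :\ c)); rewrite cardsU1 Hc0' /= add1n.
    have := cardsD1 c R; rewrite Hc /= => Hcard.
    have Hl : #|R :\ c| < r by lia.
    move=> /(_ Hl).
    rewrite big_setU1 //= (big_setD1 _ Hc) /=; lia.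
  rewrite geq_min; apply/orP; right; apply: (leq_trans Hr); apply: subset_leq_card.
  by apply/subsetP => c Hc; rewrite inE Hc HallR.
apply: (@leq_trans (\sum_(j <- iota 1 J) #|[set c in R | j <= n c]|)).
  rewrite sumn_mapE big_seq [X in _ <= X]big_seq; apply: leq_sum => j.
  by rewrite mem_iota => /andP [Hj _]; apply: Hclaim.
under eq_bigr => j _ do rewrite card_cond.
rewrite exchange_big /=; apply: leq_sum => c _.
by rewrite sum_iota_le geq_minl.
Qed.

End PartC.
Import PartC.

Module PartD.

Section Fibers.
Variables (k : nat) (sigma : {ffun 'I_k -> nat}).
Hypothesis Hsig : forall i, sigma i <= 3.

Definition valid (c : bits k) := [forall i, (c i <= sigma i) && (sigma i - c i <= 2)].
Definition Dset (c : bits k) := [set i | sigma i - c i == 1].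
Definition Fib (c : bits k) := [set w : outcome k | (Sigma w == sigma) && (X3 w == c)].
Definition mkw (c : bits k) (A : {set 'I_k}) : outcome k :=
  ([ffun i => if i \in Dset c then i \in A else sigma i - c i == 2],
   [ffun i => if i \in Dset c then i \notin A else sigma i - c i == 2], c).
Definition gw (c : bits k) (w : outcome k) := [set i in Dset c | X1 w i].

Lemma Fib_mkw c w : w \in Fib c -> w = mkw c (gw c w).
Proof.
rewrite inE => /andP [/eqP HS /eqP H3].
rewrite [w]surjective_pairing [w.1]surjective_pairing /mkw -/(X3 w) H3.
have Hi : forall i, (X1 w i : nat) + X2 w i + c i = sigma i.
  by move=> i; rewrite -HS ffunE H3.
congr (_, _, _); apply/ffunP => i; rewrite ffunE !inE; have := Hi i;
  rewrite /X1 /X2; case: (w.1.1 i); case: (w.1.2 i); case: (c i) => /= <-;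
  rewrite ?addn0 ?addn1 ?add0n ?add1n ?subn0 ?subn1 /=; lia.
Qed.

Lemma mkw_in c (A : {set 'I_k}) : valid c -> A \subset Dset c -> mkw c A \in Fib c /\ gw c (mkw c A) = A.
Proof.
move=> /forallP Hv HA; split.
  rewrite inE eqxx andbT; apply/eqP/ffunP => i; rewrite !ffunE /= /Dset !inE.
  have := Hv i; have := Hsig i.
  case: (sigma i) => [|[|[|[|s]]]]; case: (c i); case: (i \in A) => //=.
apply/setP => i; rewrite /gw inE /X1 /= ffunE; case Hi: (i \in Dset c) => //=.
by symmetry; apply/negbTE/negP => /(subsetP HA); rewrite Hi.
Qed.

Lemma Fib_valid c w : w \in Fib c -> valid c.
Proof.
rewrite inE => /andP [/eqP HS /eqP H3]; apply/forallP => i.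
move/ffunP: HS => /(_ i); rewrite ffunE H3 => <-; lia.
Qed.

Lemma Fib_card c : #|Fib c| = if valid c then 2 ^ #|Dset c| else 0.
Proof.
case: (boolP (valid c)) => Hv; last first.
  apply: eq_card0 => w; apply/negP => /Fib_valid; by rewrite (negbTE Hv).
have -> : Fib c = mkw c @: powerset (Dset c).
  apply/setP => w; apply/idP/imsetP.
    move=> Hw; exists (gw c w); last exact: Fib_mkw.
    by rewrite powersetE; apply/subsetP => i; rewrite inE => /andP [].
  by case=> A; rewrite powersetE => HA ->; case: (mkw_in Hv HA).
rewrite card_in_imset ?card_powerset // => A B; rewrite !powersetE => HA HB E.
by case: (mkw_in Hv HA) => _ <-; case: (mkw_in Hv HB) => _ <-; rewrite E.
Qed.

Definition Iset := [set i | (sigma i == 1) || (sigma i == 2)].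
Definition mkc (B : {set 'I_k}) : bits k :=
  [ffun i => (sigma i == 3) || ((sigma i == 1) && (i \notin B)) || ((sigma i == 2) && (i \in B))].

Lemma D_sub c : valid c -> Dset c \subset Iset.
Proof.
move=> /forallP Hv; apply/subsetP => i; rewrite !inE; have := Hv i; have := Hsig i.
by case: (sigma i) => [|[|[|[|s]]]]; case: (c i).
Qed.

Lemma mkc_D c : valid c -> mkc (Dset c) = c.
Proof.
move=> /forallP Hv; apply/ffunP => i; rewrite ffunE !inE; have := Hv i; have := Hsig i.
by case: (sigma i) => [|[|[|[|s]]]]; case: (c i).
Qed.

Lemma mkc_valid (B : {set 'I_k}) : B \subset Iset -> valid (mkc B) /\ Dset (mkc B) = B.
Proof.
move=> HB; split.
  apply/forallP => i; rewrite ffunE; have := Hsig i.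
  by case: (sigma i) => [|[|[|[|s]]]]; case: (i \in B).
apply/setP => i; rewrite !inE ffunE; have := Hsig i.
have := subsetP HB i; rewrite inE.
by case: (sigma i) => [|[|[|[|s]]]]; case: (i \in B) => //= /(_ isT).
Qed.

Lemma sum_fib (F : nat -> nat) : F 0 = 0 ->
  \sum_(c : bits k) F #|Fib c| = \sum_(d < #|Iset|.+1) 'C(#|Iset|, d) * F (2 ^ d).
Proof.
move=> F0.
rewrite (bigID valid) /= [X in _ + X]big1 ?addn0; last by move=> c /negbTE Hc; rewrite Fib_card Hc.
under eq_bigr => c Hc do rewrite Fib_card Hc.
have -> : \sum_(c | valid c) F (2 ^ #|Dset c|) = \sum_(B in Dset @: [set c | valid c]) F (2 ^ #|B|).
  rewrite big_imset /=; first by apply: eq_bigl => c; rewrite inE.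
  move=> c1 c2; rewrite !inE => H1 H2 E; by rewrite -(mkc_D H1) -(mkc_D H2) E.
have -> : Dset @: [set c | valid c] = [set B : {set 'I_k} | B \subset Iset].
  apply/setP => B; rewrite inE; apply/imsetP/idP.
    by case=> c; rewrite inE => Hc ->; apply: D_sub.
  move=> HB; case: (mkc_valid HB) => Hv HD; exists (mkc B); by rewrite ?inE.
rewrite (partition_big (fun B : {set 'I_k} => (inord #|B| : 'I_#|Iset|.+1)) predT) //=.
apply: eq_bigr => d _.
rewrite -(cards_draws Iset d) -sum_nat_cond_const.
apply: eq_big => B; last first.
  rewrite inE => /andP [HB /eqP <-]; rewrite inordK //; rewrite ltnS; exact: subset_leq_card.
rewrite inE; case HB: (B \subset Iset) => //=.
have HBs : #|B| < #|Iset|.+1 by rewrite ltnS; exact: subset_leq_card.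
apply/eqP/eqP => [<-|H]; first by rewrite inordK.
by apply: val_inj; rewrite /= inordK.
Qed.

End Fibers.

End PartD.
Import PartD.

Module PartE.

Lemma count_enum_pred (T : finType) (A : pred T) (p : pred T) :
  count p (enum A) = #|[set w | A w && p w]|.
Proof.
rewrite -size_filter.
have /card_uniqP <- : uniq (filter p (enum A)) by rewrite filter_uniq ?enum_uniq.
by apply: eq_card => w; rewrite mem_filter mem_enum inE andbC.
Qed.

Lemma sum_count_in (T : Type) (C : finType) (s : seq T) (h : T -> C) (R : {set C}) :
  \sum_(c in R) count (fun w => h w == c) s = count (fun w => h w \in R) s.
Proof.
elim: s => [|a s IH] /=; first by rewrite big1.
rewrite big_split /= IH; congr (_ + _).
case: (boolP (h a \in R)) => H.
  rewrite (bigD1 (h a)) //= eqxx big1 // => c /andP [_ Hc].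
  by rewrite eq_sym (negbTE Hc).
by rewrite big1 // => c Hc; case: eqP => // E; move: H; rewrite E Hc.
Qed.

Lemma card_set_sum (C : finType) (P : pred C) : #|[set c | P c]| = \sum_c P c.
Proof.
by rewrite -[LHS]muln1 -sum_nat_cond_const big_mkcond /=; apply: eq_bigr => c _; case: (P c).
Qed.

Lemma sumn_sub_min (T : Type) (l : seq T) (f : T -> nat) r :
  sumn [seq f v - r | v <- l] + sumn [seq minn (f v) r | v <- l] = sumn (map f l).
Proof. elim: l => //= a l IH; lia. Qed.

Lemma sum_undup (T : Type) (V : eqType) (s : seq T) (W : T -> V) (Q : pred T) :
  sumn [seq count (fun w => Q w && (W w == v)) s | v <- undup (map W s)] = count Q s.
Proof.
have Hc : forall (p : pred T) l, count p l = \sum_(w <- l) p w.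
  by move=> p; elim=> [|a l IH]; rewrite ?big_nil ?big_cons //= IH.
rewrite sumn_mapE.
under eq_bigr => v _ do rewrite Hc.
rewrite exchange_big /= Hc.
have HU : all (fun w => W w \in undup (map W s)) s.
  rewrite -all_map; apply/allP => v Hv; have H : v \in undup (map W s) by rewrite mem_undup.
  exact: H.
have Huq := undup_uniq (map W s).
move: HU Huq; set U := undup _; clearbody U => HU Huq.
elim: s HU => [|a l IH] /=; first by rewrite !big_nil.
case/andP => Ha Hl; rewrite !big_cons IH //; congr (_ + _).
case: (Q a) => /=; last by rewrite big1.
have Hc2 : forall (p : pred V) l, count p l = \sum_(w <- l) p w.
  by move=> p; elim=> [|b l' IH']; rewrite ?big_nil ?big_cons //= IH'.
rewrite -Hc2 (eq_count (a2 := pred1 (W a))) ?count_uniq_mem ?Ha // => i.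
Qed.

Lemma clumpy_count m j :
  count (fun n => j <= n) (clumpy_n m) = \sum_(d < m.+1) 'C(m, d) * (j <= 2 ^ d).
Proof.
rewrite /clumpy_n count_flatten -map_comp sumn_mapE.
have -> : iota 0 m.+1 = index_iota 0 m.+1 by rewrite /index_iota subn0.
rewrite big_mkord (reindex_inj rev_ord_inj) /=.
apply: eq_bigr => d _; rewrite count_nseq /= subSS.
have Hd : d <= m by rewrite -ltnS.
by rewrite subKn // bin_sub // mulnC.
Qed.

Section Spec.
Variables (k : nat) (sigma : {ffun 'I_k -> nat}).
Hypothesis Hsig : forall i, sigma i <= 3.

Lemma n_fib c : count (fun w => X3 w == c) (enum [pred w : outcome k | Sigma w == sigma]) = #|Fib sigma c|.
Proof. by rewrite count_enum_pred. Qed.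

Lemma size_slice : size (enum [pred w : outcome k | Sigma w == sigma]) = 3 ^ #|Iset sigma|.
Proof.
have := sum_count_in (enum [pred w : outcome k | Sigma w == sigma]) (@X3 k) [set: bits k].
under eq_bigr => c _ do rewrite n_fib.
rewrite (eq_count (a2 := predT)); last by move=> w; rewrite inE.
rewrite count_predT => <-.
rewrite (eq_bigl predT); last by move=> c; rewrite inE.
rewrite (sum_fib Hsig (F := id)) //=.
have := expnDn 1 2 #|Iset sigma|; rewrite add1n => ->.
by apply: eq_bigr => d _; rewrite exp1n mul1n.
Qed.

Lemma sj_clumpy j : 0 < j ->
  #|[set c | j <= #|Fib sigma c|]| = count (fun n => j <= n) (clumpy_n #|Iset sigma|).
Proof.
move=> Hj; rewrite clumpy_count card_set_sum (sum_fib Hsig (F := fun n => j <= n)) //=.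
by rewrite leqn0; case: j Hj.
Qed.

Lemma sum_clumpy : sumn [seq count (fun n => j <= n) (clumpy_n #|Iset sigma|) | j <- iota 1 (2 ^ #|Iset sigma|)]
   = 3 ^ #|Iset sigma|.
Proof.
set m := #|Iset sigma|.
under eq_map => j do rewrite clumpy_count.
rewrite sumn_mapE exchange_big /=.
have := expnDn 1 2 m; rewrite add1n => ->.
apply: eq_bigr => d _; rewrite exp1n mul1n -big_distrr /= sum_iota_le.
congr (_ * _); apply/minn_idPl; rewrite leq_exp2l //; by rewrite -ltnS.
Qed.

End Spec.

End PartE.
Import PartE.

Theorem mainTheorem10 (k : nat) (Z : finType) (c : vl_code k Z)
    (x y : nat) (sigma : {ffun 'I_k -> nat}) :
  1 < #|Z| ->
  is_stopping_time c ->
  zero_error c ->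
  (forall i, sigma i <= 3) ->
  #|[set i | sigma i == 1]| = x ->
  #|[set i | sigma i == 2]| = y ->
  Rge (cond_entropy_Sigma (fun w => (Z1N c w, Z2N c w)) sigma)
      (entropy_list (clumpy x y)).
Proof.
move=> _ Hst Hze Hsig Hx Hy.
have Hm : #|Iset sigma| = x + y.
  rewrite -Hx -Hy -cardsUI.
  have -> : [set i | sigma i == 1] :&: [set i | sigma i == 2] = set0.
    by apply/setP => i; rewrite !inE; case: eqP => // ->.
  rewrite cards0 addn0; apply: eq_card => i; by rewrite !inE.
rewrite /cond_entropy_Sigma /distr_of /clumpy /= -Hm.
set S := enum _.
set ws := map _ S.
set m := #|Iset sigma|.
have HS : size S = 3 ^ m := size_slice Hsig.
have Hws : size ws = 3 ^ m by rewrite size_map.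
have H3pos : (0 < 3 ^ m)%N by rewrite expn_gt0.
rewrite Hws (@entropy_form _ (undup ws) (fun v => count_mem v ws) (3 ^ m)) //.
rewrite (@entropy_form _ (iota 1 (2 ^ m)) (fun j => count (leq j) (clumpy_n m)) (3 ^ m)) //.
have Htv : sumn [seq count_mem v ws | v <- undup ws] = 3 ^ m.
  rewrite -HS -count_predT -(sum_undup S (fun w => (Z1N c w, Z2N c w)) predT); congr sumn; apply: eq_map => v.
  by rewrite count_map; apply: eq_count.
rewrite Htv sum_clumpy // -/m.
suff HP : Rle (rsum [seq phi (count_mem v ws) | v <- undup ws])
           (rsum [seq phi (count (leq j) (clumpy_n m)) | j <- iota 1 (2 ^ m)]).
  have Hd : Rlt 0 (Rmult (INR (3 ^ m)) (ln (INR 2))).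
    apply: Rmult_lt_0_compat; first by apply: lt_0_INR; apply/ltP.
    by rewrite -ln_1; apply: ln_increasing; rewrite /=; lra.
  apply: Rle_ge; rewrite /Rdiv; apply: Rmult_le_compat_r.
    by left; apply: Rinv_0_lt_compat.
  lra.
set B := (3 ^ m + size (clumpy_n m))%N.
rewrite (@sum_cake _ _ (fun v => count_mem v ws) B); last first.
  by move=> v; rewrite /B -Hws; apply: leq_trans (count_size _ _) (leq_addr _ _).
rewrite (@sum_cake _ _ (fun j => count (leq j) (clumpy_n m)) B); last first.
  by move=> v; rewrite /B; apply: leq_trans (count_size _ _) (leq_addl _ _).
apply: rsum_le => r _; apply: Rmult_le_compat_l; first exact: gam_ge0.
apply: le_INR; apply/leP.
have E1 := sumn_sub_min (undup ws) (fun v => count_mem v ws) r.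
have E2 := sumn_sub_min (iota 1 (2 ^ m)) (fun j => count (leq j) (clumpy_n m)) r.
rewrite Htv in E1; rewrite sum_clumpy // -/m in E2.
suff Hkey : (sumn [seq minn (count (leq j) (clumpy_n m)) r | j <- iota 1 (2 ^ m)] <=
             sumn [seq minn (count_mem v ws) r | v <- undup ws])%N by lia.
have [R [HR Hsum]] := topr (fun c => #|Fib sigma c|) r (2 ^ m).
have -> : [seq minn (count (leq j) (clumpy_n m)) r | j <- iota 1 (2 ^ m)] =
          [seq minn #|[set c | j <= #|Fib sigma c|]| r | j <- iota 1 (2 ^ m)].
  apply/eq_in_map => j; rewrite mem_iota => /andP [Hj _].
  by rewrite sj_clumpy.
apply: (leq_trans Hsum).
under eq_bigr => c' _ do rewrite -(n_fib sigma c').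
rewrite sum_count_in.
rewrite -(sum_undup S (fun w => (Z1N c w, Z2N c w)) (fun w => X3 w \in R)).
rewrite !sumn_mapE; apply: leq_sum => v _.
rewrite leq_min; apply/andP; split.
  by rewrite count_map; apply: sub_count => w /andP [].
rewrite -size_filter.
set L := filter _ S.
have HL : uniq (map (@X3 k) L).
  have HSu : uniq S by rewrite /S enum_uniq.
  have HSm : forall w, (w \in S) = (Sigma w == sigma) by move=> w; rewrite /S mem_enum.
  move: HSu HSm; rewrite /L; clear L; clearbody S => HSu HSm.
  rewrite map_inj_in_uniq; first by rewrite filter_uniq.
  move=> w1 w2.
  rewrite !mem_filter !HSm /= => /andP [/andP [_ /eqP Hw1] H1] /andP [/andP [_ /eqP Hw2] H2] E.
  apply: (class_fiber_inj Hst Hze) => //; first by rewrite (eqP H1) (eqP H2).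
  by rewrite Hw1 Hw2.
rewrite -(size_map (@X3 k)); apply: (leq_trans (uniq_leq_size (s2 := enum R) HL _)).
  move=> c' /mapP [w Hw ->]; rewrite mem_enum; move: Hw; rewrite mem_filter => /andP [/andP [H _] _].
  exact: H.
by rewrite -cardE.
Qed.
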